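(* Let $p$ be a prime, $G$ a Hausdorff topological group, and suppose $\gamma\in G$ has a topological $p$-Jordan decomposition $\gamma=\gamma_{ts}\gamma_{tu}$. Then: (1) if $\gamma=\gamma'_{ts}\gamma'_{tu}$ is also a topological $p$-Jordan decomposition, then $\gamma_{ts}=\gamma'_{ts}$ and $\gamma_{tu}=\gamma'_{tu}$; (2) the closure of the subgroup generated by $\gamma$ contains $\gamma_{ts}$ and $\gamma_{tu}$; (3) if $G'$ is another Hausdorff topological group and $f:G\to G'$ is a continuous homomorphism, then $f(\gamma)=f(\gamma_{ts})f(\gamma_{tu})$ is a topological $p$-Jordan decomposition; (4) for $g\in G$, $g\gamma g^{-1}=(g\gamma_{ts}g^{-1})(g\gamma_{tu}g^{-1})$ is a topological $p$-Jordan decomposition.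
   Context: An element $\gamma$ of a topological group is absolutely $p$-semisimple if it has finite order coprime to $p$, and topologically $p$-unipotent if $\lim_{n\to\infty}\gamma^{p^n}=1$. A topological $p$-Jordan decomposition of $\gamma$ is a pair of commuting elements $(\gamma_{ts},\gamma_{tu})$ with $\gamma=\gamma_{ts}\gamma_{tu}$, $\gamma_{ts}$ absolutely $p$-semisimple and $\gamma_{tu}$ topologically $p$-unipotent. *)

(* Defs.v *)
From HB Require Import structures.
From mathcomp Require Import all_boot all_order.
From mathcomp Require Import monoid.
From mathcomp Require Import all_classical topology.
Set Implicit Arguments. Unset Strict Implicit. Unset Printing Implicit Defensive.
Local Open Scope group_scope.
Local Open Scope classical_set_scope.

HB.mixin Record isTopologicalGroup G of Group G & Topological G := {
  mulg_continuous : continuous (fun xy : G * G => xy.1 * xy.2);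
  invg_continuous : continuous (fun x : G => x^-1)
}.
#[short(type="topologicalGroupType")]
HB.structure Definition TopologicalGroup :=
  {G of isTopologicalGroup G & Group G & Topological G}.

Definition abs_p_semisimple (p : nat) (G : groupType) (x : G) : Prop :=
  exists n : nat, (0 < n)%N /\ coprime n p /\ x ^+ n = 1.
Definition top_p_unipotent (p : nat) (G : topologicalGroupType) (x : G) : Prop :=
  (fun n : nat => x ^+ (p ^ n)) @ \oo --> (1 : G).
Definition top_p_jordan (p : nat) (G : topologicalGroupType) (g s u : G) : Prop :=
  [/\ g = s * u, commute s u, abs_p_semisimple p s & top_p_unipotent p u].
Definition cyclic_subgroup (G : groupType) (g : G) : set G :=
  [set x | exists n : nat, x = g ^+ n \/ x = (g ^+ n)^-1].

(* Main.v *)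
Require Import Defs.
From HB Require Import structures.
From mathcomp Require Import all_boot all_order.
From mathcomp Require Import monoid.
From mathcomp Require Import all_classical topology.
From mathcomp Require cyclic.
Local Open Scope group_scope.
Local Open Scope classical_set_scope.

Section Aux.
Variable G : topologicalGroupType.

Lemma mul_cvg (T : Type) (F : set_system T) (FF : Filter F) (a b : T -> G) (x y : G) :
  a @ F --> x -> b @ F --> y -> (fun t => a t * b t) @ F --> x * y.
Proof.
move=> ha hb.
exact: (@continuous_cvg _ _ _ F FF (fun t => (a t, b t))
  (fun xy : G * G => xy.1 * xy.2) (x, y) (mulg_continuous (x, y)) (cvg_pair ha hb)).
Qed.

Lemma inv_cvg (T : Type) (F : set_system T) (FF : Filter F) (a : T -> G) (x : G) :
  a @ F --> x -> (fun t => (a t)^-1) @ F --> x^-1.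
Proof.
move=> ha; exact: (@continuous_cvg _ _ _ F FF a (fun x : G => x^-1) x
  (invg_continuous x) ha).
Qed.

Lemma expg_modn (x : G) n a : x ^+ n = 1 -> x ^+ a = x ^+ (a %% n).
Proof.
move=> hx; rewrite {1}(divn_eq a n) expgnDr mulnC expgnA hx expg1n mul1g.
by [].
Qed.

Lemma jordan_seq p (g s u : G) n M : top_p_jordan p g s u ->
  (0 < M)%N -> s ^+ n = 1 -> p ^ M = 1 %[mod n] ->
  (fun k => g ^+ (p ^ (M * k))) @ \oo --> s.
Proof.
case=> -> hc _ hu M0 hs hpM.
have eS k : s ^+ (p ^ (M * k)) = s.
  rewrite (@expg_modn s n _ hs) expnM -modnXm hpM modnXm exp1n.
  by rewrite -(@expg_modn s n _ hs) expg1.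
have -> : (fun k => (s * u) ^+ (p ^ (M * k))) = (fun k => s * u ^+ (p ^ (M * k))).
  by apply: funext => k; rewrite expgMn // eS.
rewrite -[X in _ --> X]mulg1; apply: mul_cvg; first exact: cvg_cst.
have hM : (fun k => M * k)%N @ \oo --> \oo.
  have := @cvg_mulnr M M0. by under eq_fun do rewrite mulnC.
exact: (cvg_comp _ _ hM hu).
Qed.

Lemma jordan_transport p (G' : topologicalGroupType) (f : G -> G')
  (fM : forall x y, f (x * y) = f x * f y) (fc : continuous f) (g s u : G) :
  top_p_jordan p g s u -> top_p_jordan p (f g) (f s) (f u).
Proof.
have f1 : f 1 = 1.
  by apply: (@mulgI _ (f 1)); rewrite -fM !mulg1.
have fX x n : f (x ^+ n) = f x ^+ n.
  by elim: n => [|n IH]; rewrite ?f1 // !expgS fM IH.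
case=> -> hc [n [n0 [cop hn]]] hu; split.
- exact: fM.
- by rewrite /commute -!fM hc.
- by exists n; rewrite -fX hn f1.
- rewrite /top_p_unipotent -f1.
  have -> : (fun k => f u ^+ (p ^ k)) = f \o (fun k => u ^+ (p ^ k)).
    by apply: funext => k; rewrite /= fX.
  exact: (@continuous_cvg _ _ _ _ _ _ f 1 (fc 1) hu).
Qed.
End Aux.

Lemma totient_mod p n : prime p -> coprime n p -> (0 < n)%N ->
  p ^ (totient n) = 1 %[mod n].
Proof.
by move=> _ cop _; apply: cyclic.Euler_exp_totient; rewrite coprime_sym.
Qed.

Theorem proposition1p7 (p : nat) (hp : prime p)
  (G : topologicalGroupType) (hG : hausdorff_space G)
  (g s u : G) (J : top_p_jordan p g s u) :
  [/\ (forall s' u' : G, top_p_jordan p g s' u' -> s' = s /\ u' = u),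
      closure (cyclic_subgroup g) s /\ closure (cyclic_subgroup g) u,
      (forall (G' : topologicalGroupType) (f : {multiplicative G -> G'}),
         hausdorff_space G' -> continuous f ->
         top_p_jordan p (f g) (f s) (f u)) &
      (forall h : G, top_p_jordan p (h * g * h^-1) (h * s * h^-1) (h * u * h^-1))].
Proof.
have J' := J.
case: J' => gE hc [n [n0 [cop hn]]] hu.
set t := totient n.
have t0 : (0 < t)%N by rewrite totient_gt0.
have ht : p ^ t = 1 %[mod n] by exact: totient_mod.
have hseq := @jordan_seq G p g s u n t J t0 hn ht.
split.
- move=> s' u' J2; have J2' := J2.
  case: J2' => gE' hc' [n' [n0' [cop' hn']]] hu'.
  set t' := totient n'.
  have t0' : (0 < t')%N by rewrite totient_gt0.
  have ht' : p ^ t' = 1 %[mod n'] by exact: totient_mod.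
  have M0 : (0 < t * t')%N by rewrite muln_gt0 t0 t0'.
  have e1 : p ^ (t * t') = 1 %[mod n] by rewrite expnM -modnXm ht modnXm exp1n.
  have e2 : p ^ (t * t') = 1 %[mod n'].
    by rewrite mulnC expnM -modnXm ht' modnXm exp1n.
  have c1 := @jordan_seq G p g s u n _ J M0 hn e1.
  have c2 := @jordan_seq G p g s' u' n' _ J2 M0 hn' e2.
  have ess : s' = s by exact: (cvg_unique hG c2 c1).
  split => //; apply: (@mulgI _ s); rewrite -gE -ess -gE'//.
- have cyc k : closure (cyclic_subgroup g) (g ^+ k).
    by apply: subset_closure; exists k; left.
  split.
    apply: (closed_cvg _ (@closed_closure _ (cyclic_subgroup g)) _ _ hseq).
    by apply: nearW => k; apply: cyc.
  have hpos k : (0 < p ^ (t * k))%N by rewrite expn_gt0 prime_gt0.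
  have E k : g * (g ^+ (p ^ (t * k)))^-1 = (g ^+ (p ^ (t * k)).-1)^-1.
    by rewrite -(prednK (hpos k)) expgSr invgM mulgA mulgV mul1g prednK.
  have : (fun k => g * (g ^+ (p ^ (t * k)))^-1) @ \oo --> g * s^-1.
    by apply: mul_cvg; [exact: cvg_cst | exact: inv_cvg].
  have -> : g * s^-1 = u by rewrite gE hc mulgK.
  move=> hc2; apply: (closed_cvg _ (@closed_closure _ (cyclic_subgroup g)) _ _ hc2).
  apply: nearW => k; rewrite E; apply: subset_closure; exists (p ^ (t * k)).-1.
  by right.
- move=> G' f _ fc; apply: jordan_transport => //; exact: gmulfM.
- move=> h; apply: (@jordan_transport G p G (fun x => h * x * h^-1)) => //.
    by move=> x y; rewrite !mulgA mulgVK.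
  move=> x; apply: mul_cvg; last exact: cvg_cst.
  by apply: mul_cvg; [exact: cvg_cst | exact: cvg_id].
Qed.
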